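(* Let $\mathbf c,\mathbf c_0\in\mathbb{R}^n$ and let $\mathbf P,\mathbf P_0\in\mathbb{R}^{n\times n}$ be symmetric positive definite. Let $\mathbf P_0=\mathbf L_0\mathbf L_0^\top$ be the Cholesky factorization, $\tilde{\mathbf c}=\mathbf L_0^\top(\mathbf c-\mathbf c_0)$, $\tilde{\mathbf P}=\mathbf L_0^{-1}\mathbf P\mathbf L_0^{-\top}$, and $\ell^*=\sup_{\beta\in\mathcal{I}_{\tilde{\mathbf P}}}\ell_{\tilde{\mathbf c},\tilde{\mathbf P}}(\beta)$. Then $$\mathcal{E}(\mathbf c,\mathbf P)\Subset\mathcal{E}\big(\mathbf c_0,(-\ell^* )^{-1}\mathbf P_0\big)$$ and $$\mathcal{E}(\mathbf d,-\ell^*\mathbf P)\Subset\mathcal{E}(\mathbf c_0,\mathbf P_0),\qquad\text{where } \mathbf d=(-\ell^* )^{-1/2}(\mathbf c-\mathbf c_0)+\mathbf c_0.$$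
   Context: $\mathcal{E}(\mathbf c,\mathbf P)=\{\mathbf x:(\mathbf x-\mathbf c)^\top\mathbf P(\mathbf x-\mathbf c)\le1\}$; $\mathcal{E}\Subset\mathcal{E}_0$ means $\mathcal{E}\subseteq\mathcal{E}_0$ and $\partial\mathcal{E}\cap\partial\mathcal{E}_0\neq\emptyset$. For symmetric positive definite $\mathbf Q$ and vector $\mathbf a$: let $\mathbf Q=\mathbf V\mathbf D\mathbf V^\top$ be a spectral decomposition ($\mathbf V$ orthogonal, $\mathbf D$ diagonal with entries $\lambda_i$), $\bar{\mathbf a}=\mathbf V^\top\mathbf a$, $S(\bar{\mathbf a})=\{i:\bar a_i\neq0\}$, $\lambda_{\min}(\mathbf Q)$ the smallest eigenvalue; $\mathcal{I}_{\mathbf Q}=(\lambda_{\min}(\mathbf Q)^{-1},\infty)$ if some $i\in S(\bar{\mathbf a})$ has $\lambda_i=\lambda_{\min}(\mathbf Q)$, and $[\lambda_{\min}(\mathbf Q)^{-1},\infty)$ otherwise; and $\ell_{\mathbf a,\mathbf Q}(\beta)=-\beta-\sum_{i\in S(\bar{\mathbf a})}\bar a_i^2\frac{\lambda_i\beta}{\lambda_i\beta-1}$ for $\beta\in\mathcal{I}_{\mathbf Q}$. *)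

(* Defs.v *)
From HB Require Import structures.
From mathcomp Require Import all_boot all_order all_algebra.
From mathcomp Require Import all_classical all_reals all_analysis.
Set Implicit Arguments. Unset Strict Implicit. Unset Printing Implicit Defensive.
Import Order.TTheory GRing.Theory Num.Theory.
Import numFieldNormedType.Exports.
Local Open Scope classical_set_scope.
Local Open Scope ring_scope.

Section Defs.
Variable R : realType.

Definition qform n (c : 'cV[R]_n) (P : 'M[R]_n) (x : 'cV[R]_n) : R :=
  ((x - c)^T *m P *m (x - c)) ord0 ord0.

Definition ellipsoid n (c : 'cV[R]_n) (P : 'M[R]_n) : set 'cV[R]_n :=
  [set x | qform c P x <= 1].

Definition boundary n (A : set 'cV[R]_n) : set 'cV[R]_n :=
  closure A `\` interior A.

(* E ⋐ E0 : E ⊆ E0 and ∂E ∩ ∂E0 ≠ ∅ *)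
Definition touch_subset n (E E0 : set 'cV[R]_n) : Prop :=
  E `<=` E0 /\ boundary E `&` boundary E0 !=set0.

Definition symmetric_mx n (P : 'M[R]_n) : Prop := P^T = P.

Definition posdef_mx n (P : 'M[R]_n) : Prop :=
  symmetric_mx P /\ forall x : 'cV[R]_n, x != 0 -> 0 < (x^T *m P *m x) ord0 ord0.

Definition cholesky_factor n (P0 L0 : 'M[R]_n) : Prop :=
  is_trig_mx L0 /\ (forall i, 0 < L0 i i) /\ P0 = L0 *m L0^T.

Definition orthogonal_mx n (V : 'M[R]_n) : Prop := V^T *m V = 1%:M.

Definition spectral_decomp n (Q V : 'M[R]_n) (lam : 'I_n -> R) : Prop :=
  orthogonal_mx V /\ Q = V *m diag_mx (\row_i lam i) *m V^T.

Definition lam_min n (lam : 'I_n.+1 -> R) : R :=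
  \big[Num.min/lam ord0]_(i < n.+1) lam i.

Definition abar n (V : 'M[R]_n) (a : 'cV[R]_n) : 'I_n -> R :=
  fun i => (V^T *m a) i ord0.

Definition interval_I n (V : 'M[R]_n.+1) (lam : 'I_n.+1 -> R)
  (a : 'cV[R]_n.+1) : set R :=
  if `[< exists i, abar V a i != 0 /\ lam i = lam_min lam >]
  then [set b | (lam_min lam)^-1 < b]
  else [set b | (lam_min lam)^-1 <= b].

Definition ell n (V : 'M[R]_n) (lam : 'I_n -> R) (a : 'cV[R]_n) (b : R) : R :=
  - b - \sum_(i < n | abar V a i != 0)
          (abar V a i) ^+ 2 * (lam i * b / (lam i * b - 1)).

Definition ell_star n (V : 'M[R]_n.+1) (lam : 'I_n.+1 -> R)
  (a : 'cV[R]_n.+1) : R :=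
  sup [set ell V lam a b | b in interval_I V lam a].

End Defs.

(* Main.v *)
Require Import Defs.
From HB Require Import structures.
From mathcomp Require Import all_boot all_order all_algebra.
From mathcomp Require Import all_classical all_reals all_analysis.
From mathcomp Require Import ring lra.
Import Order.TTheory GRing.Theory Num.Theory.
Import numFieldNormedType.Exports.
Set Implicit Arguments. Unset Strict Implicit.
Local Open Scope classical_set_scope.
Local Open Scope ring_scope.
Lemma qf_sum (R : realType) n (u : 'cV[R]_n) (d : 'I_n -> R) :
  (u^T *m diag_mx (\row_i d i) *m u) ord0 ord0 = \sum_i d i * u i ord0 ^+ 2.
Proof.
rewrite mul_mx_diag !mxE; apply: eq_bigr => i _; rewrite !mxE; ring.
Qed.
Lemma qf_id (R : realType) n (u : 'cV[R]_n) :
  (u^T *m u) ord0 ord0 = \sum_i u i ord0 ^+ 2.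
Proof. rewrite !mxE; apply: eq_bigr => i _; rewrite !mxE; ring. Qed.
Lemma transf (R : realType) n (c c0 : 'cV[R]_n) (P L0 V : 'M[R]_n) (lam : 'I_n -> R) :
  L0 \in unitmx -> V^T *m V = 1%:M ->
  invmx L0 *m P *m (invmx L0)^T = V *m diag_mx (\row_i lam i) *m V^T ->
  forall z : 'cV[R]_n,
  qform c P (c0 + (invmx L0)^T *m V *m z) =
     ((z - V^T *m (L0^T *m (c - c0)))^T *m diag_mx (\row_i lam i) *m (z - V^T *m (L0^T *m (c - c0)))) ord0 ord0
  /\ qform c0 (L0 *m L0^T) (c0 + (invmx L0)^T *m V *m z) = (z^T *m z) ord0 ord0.
Proof.
move=> uL VV hP z.
have VV' : V *m V^T = 1%:M by apply: mulmx1C.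
have uLT : L0^T \in unitmx by rewrite unitmx_tr.
have LiL : (invmx L0)^T *m L0^T = 1%:M by rewrite trmx_inv mulVmx.
have LLi : L0^T *m (invmx L0)^T = 1%:M by rewrite trmx_inv mulmxV.
have key : ((invmx L0)^T *m V)^T *m P *m ((invmx L0)^T *m V) = diag_mx (\row_i lam i).
  rewrite trmx_mul trmxK -!mulmxA (mulmxA (invmx L0)) (mulmxA (invmx L0 *m P)) hP.
  by rewrite !mulmxA VV mul1mx -mulmxA VV mulmx1.
have key0 : ((invmx L0)^T *m V)^T *m (L0 *m L0^T) *m ((invmx L0)^T *m V) = 1%:M.
  rewrite trmx_mul trmxK trmx_inv -!mulmxA (mulmxA (invmx L0)) mulVmx // mul1mx.
  by rewrite (mulmxA (L0^T)) mulmxV // mul1mx.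
split.
  rewrite /qform.
  have -> : c0 + (invmx L0)^T *m V *m z - c =
     (invmx L0)^T *m V *m (z - V^T *m (L0^T *m (c - c0))).
    rewrite mulmxBr !mulmxA -[(invmx L0)^T *m V *m V^T](mulmxA) VV' mulmx1 LiL mul1mx.
    by rewrite opprB addrA (addrC c0).
  by rewrite trmx_mul -key !mulmxA.
rewrite /qform addrC addKr trmx_mul.
have -> : z^T *m z = z^T *m 1%:M *m z by rewrite mulmx1.
by rewrite -key0 !mulmxA.
Qed.
Lemma chol_unit (R : realType) n (P0 L0 : 'M[R]_n) :
  cholesky_factor P0 L0 -> L0 \in unitmx.
Proof.
case=> tr [pos _]; rewrite unitmxE det_trig // unitfE.
by apply: lt0r_neq0; apply: prodr_gt0 => i _.
Qed.

Lemma Tinv_T (R : realType) n (L0 V : 'M[R]_n) :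
  L0 \in unitmx -> V^T *m V = 1%:M ->
  (V^T *m L0^T) *m ((invmx L0)^T *m V) = 1%:M /\
  ((invmx L0)^T *m V) *m (V^T *m L0^T) = 1%:M.
Proof.
move=> uL VV.
have h : (V^T *m L0^T) *m ((invmx L0)^T *m V) = 1%:M.
  by rewrite -mulmxA (mulmxA L0^T) trmx_inv mulmxV ?unitmx_tr // mul1mx.
by split => //; apply: mulmx1C.
Qed.
Lemma lam_min_le (R : realType) n (lam : 'I_n.+1 -> R) i : lam_min lam <= lam i.
Proof.
rewrite /lam_min (bigD1 i) //= ge_min lexx //.
Qed.
Lemma lam_min_ex (R : realType) n (lam : 'I_n.+1 -> R) : exists k, lam k = lam_min lam.
Proof.
rewrite /lam_min; apply: (big_ind (fun v => exists k, lam k = v)).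
- by exists ord0.
- move=> x y [k1 <-] [k2 <-]; case: (leP (lam k1) (lam k2)) => h.
  + by exists k1.
  + by exists k2.
- by move=> k _; exists k.
Qed.
Definition hfun {R : realType} {n} (lam a : 'I_n -> R) (b : R) : R :=
  \sum_(i < n | a i != 0) lam i * a i ^+ 2 / (lam i * b - 1) ^+ 2.

Lemma term_cont (R : realType) (l q x : R) : l * x - 1 != 0 ->
  {for x, continuous (fun b : R => q / (l * b - 1) ^+ 2)}.
Proof.
move=> hx.
apply: cvgMl_tmp.
have -> : (fun b : R => ((l * b - 1) ^+ 2)^-1) = (fun b => ((l * b - 1) * (l * b - 1))^-1).
  by apply: funext => b; rewrite expr2.
apply: cvgV; first by rewrite /= mulf_neq0.
apply: cvgM; apply: cvgB; [apply: cvgMl_tmp; exact: cvg_id | exact: cvg_cst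
  | apply: cvgMl_tmp; exact: cvg_id | exact: cvg_cst].
Qed.

Lemma hfun_cont (R : realType) n (lam a : 'I_n -> R) (x : R) :
  (forall i, a i != 0 -> lam i * x - 1 != 0) ->
  {for x, continuous (hfun lam a)}.
Proof.
move=> hx; rewrite /hfun.
have := @cvg_big R 'I_n +%R 0 (fun i => a i != 0) add_continuous R (nbhs x)
  (index_enum _) (fun i b => lam i * a i ^+ 2 / (lam i * b - 1) ^+ 2)
  (fun i => lam i * a i ^+ 2 / (lam i * x - 1) ^+ 2) _ (fun i ai => @term_cont R _ (lam i * a i ^+ 2) _ (hx i ai)).
by apply.
Qed.
Lemma lmin_gt0 (R : realType) n (lam : 'I_n.+1 -> R) :
  (forall i, 0 < lam i) -> 0 < lam_min lam.
Proof. by move=> h; case: (lam_min_ex lam) => k <-. Qed.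

Lemma Ifacts (R : realType) n (V : 'M[R]_n.+1) lam ct b :
  (forall i, 0 < lam i) -> interval_I V lam ct b ->
  (lam_min lam)^-1 <= b /\ (forall i, 1 <= lam i * b) /\
  (forall i, abar V ct i != 0 -> 1 < lam i * b).
Proof.
move=> lpos; set m := lam_min lam.
have m0 : 0 < m by exact: lmin_gt0.
have mw : m * m^-1 = 1 by rewrite mulfV // gt_eqF.
have w0 : 0 < m^-1 by rewrite invr_gt0.
have lm : forall i, m <= lam i by move=> i; exact: lam_min_le.
rewrite /interval_I; case: asboolP => [hex | hnex] /= hb.
  have hb' := ltW hb.
  split => //; split => i; have := lm i; have := lpos i; nra.
split => //; split => i; first by have := lm i; have := lpos i; nra.
move=> ai.
have : m < lam i.
  rewrite lt_neqAle lm andbT; apply/negP => /eqP e.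
  by apply: hnex; exists i; split.
have := lpos i; nra.
Qed.

Lemma pt_weak (R : realType) (u z a : R) : 1 < u -> z ^+ 2 <= u * (z - a) ^+ 2 + a ^+ 2 * (u / (u - 1)).
Proof.
move=> u1.
have u0 : u - 1 != 0 by rewrite subr_eq0 gt_eqF.
have e : u * (z - a) ^+ 2 + a ^+ 2 * (u / (u - 1)) - z ^+ 2 = ((u - 1) * z - u * a) ^+ 2 / (u - 1).
  by field.
rewrite -subr_ge0 e divr_ge0 ?sqr_ge0 //; lra.
Qed.

Lemma weak (R : realType) n (V : 'M[R]_n.+1) lam ct b (z : 'I_n.+1 -> R) :
  (forall i, 0 < lam i) -> interval_I V lam ct b ->
  \sum_i lam i * (z i - abar V ct i) ^+ 2 <= 1 ->
  \sum_i z i ^+ 2 <= - ell V lam ct b.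
Proof.
move=> lpos hb hG; have [hb0 [h1 h2]] := Ifacts lpos hb.
have b0 : 0 <= b by apply: le_trans hb0; rewrite invr_ge0 ltW // lmin_gt0.
rewrite /ell opprB opprK addrC big_mkcond /=.
apply: (@le_trans _ _ (\sum_i (b * (lam i * (z i - abar V ct i) ^+ 2) +
   (if abar V ct i != 0 then abar V ct i ^+ 2 * (lam i * b / (lam i * b - 1)) else 0)))).
  apply: ler_sum => i _; case: ifPn => [ai | ].
    by rewrite mulrA (mulrC b); apply: pt_weak; apply: h2.
  rewrite negbK => /eqP ->; rewrite subr0 addr0 mulrA (mulrC b).
  have := h1 i; have := sqr_ge0 (z i); nra.
rewrite big_split /= -mulr_sumr -big_mkcond lerD2r.
have := hG; nra.
Qed.



Lemma ell_le (R : realType) n (V : 'M[R]_n.+1) lam ct b :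
  (forall i, 0 < lam i) -> interval_I V lam ct b -> ell V lam ct b <= - (lam_min lam)^-1.
Proof.
move=> lpos hb; have [hb0 [h1 h2]] := Ifacts lpos hb.
have s0 : 0 <= \sum_(i < n.+1 | abar V ct i != 0)
          (abar V ct i) ^+ 2 * (lam i * b / (lam i * b - 1)).
  apply: sumr_ge0 => i ai; apply: mulr_ge0; first exact: sqr_ge0.
  have := h2 i ai => h; apply: divr_ge0; lra.
rewrite /ell; lra.
Qed.

Lemma I_nonempty (R : realType) n (V : 'M[R]_n.+1) lam ct :
  interval_I V lam ct ((lam_min lam)^-1 + 1).
Proof.
have h : (lam_min lam)^-1 < (lam_min lam)^-1 + 1 by lra.
by rewrite /interval_I; case: asboolP => _ /=; [| apply: ltW].
Qed.

Lemma ls_props (R : realType) n (V : 'M[R]_n.+1) lam ct :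
  (forall i, 0 < lam i) ->
  [set ell V lam ct b | b in interval_I V lam ct] !=set0 /\
  has_ubound [set ell V lam ct b | b in interval_I V lam ct] /\
  ell_star V lam ct <= - (lam_min lam)^-1.
Proof.
move=> lpos.
have ne : [set ell V lam ct b | b in interval_I V lam ct] !=set0.
  by exists (ell V lam ct ((lam_min lam)^-1 + 1)); exists ((lam_min lam)^-1 + 1) => //; exact: I_nonempty.
have ub : ubound [set ell V lam ct b | b in interval_I V lam ct] (- (lam_min lam)^-1).
  by move=> y [b hb <-]; exact: ell_le.
split => //; split; first by exists (- (lam_min lam)^-1).
exact: ge_sup.
Qed.

Lemma ls_upper (R : realType) n (V : 'M[R]_n.+1) lam ct (z : 'I_n.+1 -> R) :
  (forall i, 0 < lam i) ->
  \sum_i lam i * (z i - abar V ct i) ^+ 2 <= 1 ->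
  \sum_i z i ^+ 2 <= - ell_star V lam ct.
Proof.
move=> lpos hG; have [ne [ub _]] := ls_props V ct lpos.
rewrite lerNr; apply: ge_sup => // y [b hb <-].
rewrite lerNr; exact: weak.
Qed.

Lemma ls_lower (R : realType) n (V : 'M[R]_n.+1) lam ct b :
  (forall i, 0 < lam i) -> interval_I V lam ct b ->
  ell V lam ct b <= ell_star V lam ct.
Proof.
move=> lpos hb; have [ne [ub _]] := ls_props V ct lpos.
by apply: ub_le_sup => //; exists b.
Qed.

Lemma pt1 (R : realType) (l b a : R) : l * b - 1 != 0 ->
  l * (a * (l * b / (l * b - 1)) - a) ^+ 2 = l * a ^+ 2 / (l * b - 1) ^+ 2.
Proof. by move=> h; field. Qed.

Lemma pt2 (R : realType) (l b a : R) : l * b - 1 != 0 ->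
  (a * (l * b / (l * b - 1))) ^+ 2 =
  b * (l * (a * (l * b / (l * b - 1)) - a) ^+ 2) + a ^+ 2 * (l * b / (l * b - 1)).
Proof. by move=> h; field. Qed.

Lemma construct (R : realType) n (V : 'M[R]_n.+1) lam ct b (k : 'I_n.+1) t :
  (forall i, abar V ct i != 0 -> lam i * b - 1 != 0) ->
  (t = 0 \/ (lam k * b = 1 /\ abar V ct k = 0)) ->
  hfun lam (abar V ct) b + lam k * t ^+ 2 = 1 ->
  let z := fun i => abar V ct i * (lam i * b / (lam i * b - 1)) + (if i == k then t else 0) in
  \sum_i lam i * (z i - abar V ct i) ^+ 2 = 1 /\ \sum_i z i ^+ 2 = - ell V lam ct b.
Proof.
move=> hne ht hh z.
set a := abar V ct.
have eG : forall i, lam i * (z i - a i) ^+ 2 =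
   (if a i != 0 then lam i * a i ^+ 2 / (lam i * b - 1) ^+ 2 else 0) +
   (if i == k then lam k * t ^+ 2 else 0).
  move=> i; rewrite /z -/a; case: (eqVneq i k) => [-> | ne].
    case: ht => [-> | [hk ak]].
      rewrite addr0 expr0n /= mulr0 addr0; case: ifPn => [ak | ].
        by apply: pt1; apply: hne.
      by rewrite negbK => /eqP ->; rewrite ?(mul0r, subr0, expr0n, addr0, mulr0) /= ?(mulr0, addr0).
    by rewrite /a ak eqxx /= !(mul0r, add0r, subr0).
  rewrite addr0; case: ifPn => [ai | ].
    by rewrite addr0; apply: pt1; apply: hne.
  by rewrite negbK => /eqP ->; rewrite ?(mul0r, subr0, expr0n, addr0, mulr0) /= ?(mulr0, addr0).
have eH : forall i, z i ^+ 2 = b * (lam i * (z i - a i) ^+ 2) +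
   (if a i != 0 then a i ^+ 2 * (lam i * b / (lam i * b - 1)) else 0).
  move=> i; rewrite /z -/a; case: (eqVneq i k) => [-> | ne].
    case: ht => [-> | [hk ak]].
      rewrite addr0; case: ifPn => [ak | ].
        by apply: pt2; apply: hne.
      by rewrite negbK => /eqP ->; rewrite ?(mul0r, subr0, expr0n, addr0, mulr0) /= ?(mulr0, addr0).
    rewrite /a ak eqxx /= !(mul0r, add0r, subr0, addr0) mulrA (mulrC b) hk; ring.
  rewrite addr0; case: ifPn => [ai | ].
    by apply: pt2; apply: hne.
  by rewrite negbK => /eqP ->; rewrite ?(mul0r, subr0, expr0n, addr0, mulr0) /= ?(mulr0, addr0).
have G1 : \sum_i lam i * (z i - a i) ^+ 2 = 1.
  rewrite (eq_bigr _ (fun i _ => eG i)) big_split /= -!big_mkcond /= big_pred1_eq.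
  exact: hh.
split => //.
rewrite (eq_bigr _ (fun i _ => eH i)) big_split /= -mulr_sumr G1 mulr1 -big_mkcond /=.
by rewrite /ell opprB opprK addrC.
Qed.
Lemma I_up (R : realType) n (V : 'M[R]_n.+1) lam ct b b' :
  interval_I V lam ct b -> b <= b' -> interval_I V lam ct b'.
Proof.
rewrite /interval_I; case: asboolP => _ /= h1 h2; [exact: lt_le_trans h1 h2 | exact: le_trans h1 h2].
Qed.

Lemma hi_bound (R : realType) n (V : 'M[R]_n.+1) lam ct b :
  (forall i, 0 < lam i) -> interval_I V lam ct b ->
  hfun lam (abar V ct) (b + (((\sum_i abar V ct i ^+ 2) + 1) / lam_min lam + 1)) <= 1.
Proof.
move=> lpos hb; have [hb0 [h1 h2]] := Ifacts lpos hb.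
set a := abar V ct; set A := \sum_i a i ^+ 2; set m := lam_min lam.
have A0 : 0 <= A by apply: sumr_ge0 => i _; exact: sqr_ge0.
have m0 : 0 < m by exact: lmin_gt0.
set w := m^-1.
have mw : m * w = 1 by rewrite mulfV // gt_eqF.
have w0 : 0 < w by rewrite invr_gt0.
have pt : forall i, a i != 0 -> lam i * a i ^+ 2 / (lam i * (b + ((A + 1) / m + 1)) - 1) ^+ 2 <= a i ^+ 2 / (A + 1).
  move=> i ai; set D := (lam i * (b + ((A + 1) / m + 1)) - 1).
  have lm := lam_min_le lam i; have li := lpos i; have hi := h1 i.
  have lw : 1 <= lam i * w by rewrite -mw; apply: ler_wpM2r => //; exact: ltW.
  have eD : D = (lam i * b - 1) + lam i * w * (A + 1) + lam i.
    by rewrite /D /m -/w; ring.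
  have DA : A + 1 <= D by rewrite eD; nra.
  have Dl : lam i <= D by rewrite eD; nra.
  have D0 : 0 < D by lra.
  rewrite ler_pdivrMr ?exprn_gt0 // mulrAC ler_pdivlMr; last by lra.
  have : lam i * (A + 1) <= D ^+ 2 by rewrite expr2; nra.
  have := sqr_ge0 (a i); nra.
rewrite /hfun; apply: (le_trans (ler_sum _ pt)).
apply: (@le_trans _ _ (\sum_i a i ^+ 2 / (A + 1))).
  rewrite [X in X <= _]big_mkcond /=; apply: ler_sum => i _.
  by case: ifP => // _; apply: divr_ge0; [exact: sqr_ge0 | lra].
by rewrite -mulr_suml -/A ler_pdivrMr ?mul1r; lra.
Qed.

Lemma ivt_step (R : realType) n (V : 'M[R]_n.+1) lam ct b :
  (forall i, 0 < lam i) -> interval_I V lam ct b -> 1 <= hfun lam (abar V ct) b ->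
  exists2 c, interval_I V lam ct c & hfun lam (abar V ct) c = 1.
Proof.
move=> lpos hb hlo.
set M := ((\sum_i abar V ct i ^+ 2) + 1) / lam_min lam + 1.
have M0 : 0 < M.
  have : 0 <= ((\sum_i abar V ct i ^+ 2) + 1) / lam_min lam.
    apply: divr_ge0; last exact: ltW (lmin_gt0 lpos).
    have : 0 <= \sum_i abar V ct i ^+ 2 by apply: sumr_ge0 => i _; exact: sqr_ge0.
    lra.
  rewrite /M; lra.
have hhi := hi_bound lpos hb; rewrite -/M in hhi.
have lehi : b <= b + M by lra.
have cont : {within `[b, b + M], continuous (hfun lam (abar V ct))}.
  apply: continuous_in_subspaceT => x; rewrite inE /= in_itv /= => /andP [xlo _].
  apply: hfun_cont => i ai.
  have [_ [_ h2]] := Ifacts lpos (I_up hb xlo).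
  by have := h2 i ai; rewrite subr_eq0 => h; rewrite gt_eqF.
have hv : Num.min (hfun lam (abar V ct) b) (hfun lam (abar V ct) (b + M)) <= 1 <=
   Num.max (hfun lam (abar V ct) b) (hfun lam (abar V ct) (b + M)).
  by rewrite ge_min le_max hlo hhi orbT.
have [c cin hc] := IVT lehi cont hv.
rewrite in_itv /= in cin; case/andP: cin => cin _.
by exists c => //; exact: I_up hb cin.
Qed.

Lemma hfun_ge0 (R : realType) n (lam a : 'I_n -> R) b :
  (forall i, 0 < lam i) -> 0 <= hfun lam a b.
Proof.
move=> lpos; apply: sumr_ge0 => i _; apply: divr_ge0; last exact: sqr_ge0.
by apply: mulr_ge0; [exact: ltW | exact: sqr_ge0].
Qed.

Lemma exist_beta (R : realType) n (V : 'M[R]_n.+1) lam ct :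
  (forall i, 0 < lam i) ->
  exists b k t, [/\ interval_I V lam ct b,
    (forall i, abar V ct i != 0 -> lam i * b - 1 != 0),
    (t = 0 \/ (lam k * b = 1 /\ abar V ct k = 0)) &
    hfun lam (abar V ct) b + lam k * t ^+ 2 = 1].
Proof.
move=> lpos.
set a := abar V ct; set m := lam_min lam.
have m0 : 0 < m by exact: lmin_gt0.
have mw : m * m^-1 = 1 by rewrite mulfV // gt_eqF.
have ivt_fin : forall b, interval_I V lam ct b -> 1 <= hfun lam a b ->
    exists b k t, [/\ interval_I V lam ct b,
    (forall i, a i != 0 -> lam i * b - 1 != 0),
    (t = 0 \/ (lam k * b = 1 /\ a k = 0)) &
    hfun lam a b + lam k * t ^+ 2 = 1].
  move=> b hb h1; have [c hc hc1] := ivt_step lpos hb h1.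
  exists c, ord0, 0; split => //; last by rewrite expr0n /= mulr0 addr0.
  - move=> i ai; have [_ [_ h2]] := Ifacts lpos hc.
    by have := h2 i ai; rewrite subr_eq0 => h; rewrite gt_eqF.
  - by left.
case: (asboolP (exists i, abar V ct i != 0 /\ lam i = lam_min lam)) => [[k [ak lk]] | hnex].
  set tau := Num.sqrt (m * a k ^+ 2).
  have ak2 : 0 < a k ^+ 2 by rewrite lt0r sqr_ge0 andbT sqrf_eq0.
  have tau0 : 0 < tau by rewrite sqrtr_gt0; apply: mulr_gt0.
  have tau2 : tau ^+ 2 = m * a k ^+ 2 by rewrite sqr_sqrtr // mulr_ge0 ?sqr_ge0 // ltW.
  set blo := m^-1 + tau / m.
  have hb : interval_I V lam ct blo.
    rewrite /interval_I; case: asboolP => [_ | []]; last by exists k.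
    rewrite /= /blo -/m; have : 0 < tau / m by apply: divr_gt0.
    lra.
  apply: ivt_fin hb _.
  rewrite /hfun (bigD1 k) //=.
  have -> : lam k * a k ^+ 2 / (lam k * blo - 1) ^+ 2 = 1.
    have -> : lam k * blo - 1 = tau.
      by rewrite /blo lk -/m mulrDr mw mulrA (mulrC m) -mulrA mw mulr1; ring.
    by rewrite tau2 lk -/m divff // gt_eqF // -tau2 exprn_gt0.
  rewrite lerDl; apply: sumr_ge0 => i _; apply: divr_ge0; last exact: sqr_ge0.
  by apply: mulr_ge0; [exact: ltW | exact: sqr_ge0].
have hb0 : interval_I V lam ct m^-1.
  by rewrite /interval_I; case: asboolP => [hex|_]; [exfalso; exact: hnex hex | rewrite /= lexx].
case: (lerP (hfun lam a m^-1) 1) => hh; last by apply: ivt_fin hb0 _; exact: ltW.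
have [k lk] := lam_min_ex lam.
have ak : a k = 0.
  by case: (eqVneq (a k) 0) => // akn; exfalso; apply: hnex; exists k; split.
have lk0 : 0 < lam k := lpos k.
set t := Num.sqrt ((1 - hfun lam a m^-1) / lam k).
have t2 : t ^+ 2 = (1 - hfun lam a m^-1) / lam k.
  by rewrite sqr_sqrtr // divr_ge0 // ?subr_ge0 // ltW.
exists m^-1, k, t; split => //.
- move=> i ai; have [_ [_ h2]] := Ifacts lpos hb0.
  by have := h2 i ai; rewrite subr_eq0 => h; rewrite gt_eqF.
- by right; split => //; rewrite lk.
- by rewrite t2 mulrC divfK ?gt_eqF //; ring.
Qed.

Lemma qformZ (R : realType) n (c d : 'cV[R]_n) (P : 'M[R]_n) (x : 'cV[R]_n) (k : R) (y : 'cV[R]_n) :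
  y - c = k *: (x - d) -> qform c P y = k ^+ 2 * qform d P x.
Proof.
move=> h; rewrite /qform h linearZ /= [(k *: _)^T]linearZ /= -!scalemxAl !mxE; ring.
Qed.

Lemma qformS (R : realType) n (c : 'cV[R]_n) (P : 'M[R]_n) (x : 'cV[R]_n) (k : R) :
  qform c (k *: P) x = k * qform c P x.
Proof. by rewrite /qform -scalemxAr -scalemxAl mxE. Qed.

Lemma bd (R : realType) n (c : 'cV[R]_n) (P : 'M[R]_n) (x : 'cV[R]_n) :
  qform c P x = 1 -> boundary (ellipsoid c P) x.
Proof.
move=> hx; split; first by apply: subset_closure; rewrite /ellipsoid /= hx.
move=> /nbhs_ballP [e /= e0 he].
set t := e / (2 * (`|x - c| + 1)).
have nx : 0 <= `|x - c| by [].
have t0 : 0 < t by apply: divr_gt0 => //; lra.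
have : ellipsoid c P (x + t *: (x - c)).
  apply: he; rewrite -ball_normE /ball_ /= opprD addrA subrr add0r normrN normrZ gtr0_norm //.
  rewrite /t mulrAC ltr_pdivrMr; last by lra.
  nra.
rewrite /ellipsoid /= (@qformZ _ _ c c P x (1 + t)); last by rewrite scalerDl scale1r addrAC.
rewrite hx mulr1; nra.
Qed.
Theorem corollary2 (R : realType) (n : nat)
  (c c0 : 'cV[R]_n.+1) (P P0 L0 V : 'M[R]_n.+1) (lam : 'I_n.+1 -> R) :
  posdef_mx P -> posdef_mx P0 ->
  cholesky_factor P0 L0 ->
  let ct := L0^T *m (c - c0) in
  let Pt := invmx L0 *m P *m (invmx L0)^T in
  spectral_decomp Pt V lam ->
  let ls := ell_star V lam ct in
  let d := (Num.sqrt (- ls))^-1 *: (c - c0) + c0 in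
  touch_subset (ellipsoid c P) (ellipsoid c0 ((- ls)^-1 *: P0)) /\
  touch_subset (ellipsoid d ((- ls) *: P)) (ellipsoid c0 P0).
Proof.
move=> hP hP0 hch ct Pt [VV hPt] ls d.
have uL := chol_unit hch.
have P0E : P0 = L0 *m L0^T by case: hch => _ [].
set T := (invmx L0)^T *m V.
set Ti := V^T *m L0^T.
have [TiT TTi] := Tinv_T uL VV.
have tr := transf c c0 uL VV hPt.
have G : forall z, qform c P (c0 + T *m z) = \sum_i lam i * (z i ord0 - abar V ct i) ^+ 2.
  by move=> z; rewrite (tr z).1 qf_sum; apply: eq_bigr => i _; rewrite /abar !mxE.
have H : forall z, qform c0 P0 (c0 + T *m z) = \sum_i z i ord0 ^+ 2.
  by move=> z; rewrite P0E (tr z).2 qf_id.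
have xT : forall x, x = c0 + T *m (Ti *m (x - c0)).
  by move=> x; rewrite mulmxA TTi mul1mx addrC subrK.
have Ta : T *m (V^T *m ct) = c - c0.
  by rewrite /ct mulmxA -/Ti (mulmxA T) TTi mul1mx.
have lpos : forall i, 0 < lam i.
  move=> i; set dl : 'cV[R]_n.+1 := delta_mx i ord0.
  have e1 : c0 + T *m (V^T *m ct + dl) - c = T *m dl.
    rewrite mulmxDr Ta; move: (T *m dl) => y; apply/matrixP => p q; rewrite !mxE; ring.
  have nz : c0 + T *m (V^T *m ct + dl) - c != 0.
    rewrite e1; apply/eqP => h.
    have : Ti *m (T *m dl) = 0 by rewrite h mulmx0.
    rewrite mulmxA TiT mul1mx => /matrixP /(_ i ord0).
    by rewrite !mxE !eqxx /= => /eqP; rewrite oner_eq0.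
  have := hP.2 _ nz; rewrite -/(qform c P _) G.
  rewrite (bigD1 i) //= big1 ?addr0.
    rewrite /abar !mxE !eqxx /=; set u := \sum_(j < n.+1) _.
    by rewrite addrAC subrr add0r expr1n mulr1.
  move=> j ji; rewrite /abar !mxE (negbTE ji) /=; set u := \sum_(j < n.+1) _.
  by rewrite addr0 subrr expr0n /= mulr0.
have ub : forall x, qform c P x <= 1 -> qform c0 P0 x <= - ls.
  move=> x hx; rewrite (xT x) H.
  apply: (ls_upper (z := fun i => (Ti *m (x - c0)) i ord0)) => //.
  by rewrite -G -xT.
have s0 : 0 < - ls.
  have [_ [_ hl]] := ls_props V ct lpos.
  have : 0 < (lam_min lam)^-1 by rewrite invr_gt0 lmin_gt0.
  rewrite -/ls in hl; lra.
have [xs [xs1 xs2]] : exists xs, qform c P xs = 1 /\ qform c0 P0 xs = - ls.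
  have [b [k [t [hb hne ht hh]]]] := exist_beta V ct lpos.
  have [G1 H1] := construct hne ht hh.
  set zf := (fun i => abar V ct i * (lam i * b / (lam i * b - 1)) + (if i == k then t else 0)) in G1 H1.
  exists (c0 + T *m (\col_i zf i)).
  have e1 : qform c P (c0 + T *m (\col_i zf i)) = 1.
    by rewrite G -G1; apply: eq_bigr => i _; rewrite mxE.
  split => //; apply/eqP; rewrite eq_le ub ?e1 //=.
  rewrite H (eq_bigr (fun i => zf i ^+ 2)); last by move=> i _; rewrite mxE.
  by rewrite H1 lerN2; apply: ls_lower.
have q1 : qform c0 ((- ls)^-1 *: P0) xs = 1 by rewrite qformS xs2 mulVf // gt_eqF.
have part1 : touch_subset (ellipsoid c P) (ellipsoid c0 ((- ls)^-1 *: P0)).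
  split.
    move=> x hx; rewrite /ellipsoid /= qformS mulrC ler_pdivrMr // mul1r.
    exact: ub.
  by exists xs; split; apply: bd.
split => //.
set r := Num.sqrt (- ls).
have r0 : 0 < r by rewrite sqrtr_gt0.
have r2 : r ^+ 2 = - ls by rewrite sqr_sqrtr // ltW.
have E1 : forall x, qform d ((- ls) *: P) x = qform c P (c0 + r *: (x - c0)).
  move=> x; rewrite qformS (@qformZ _ _ c d P x r) ?r2 //.
  apply/matrixP => p q; rewrite /d -/r !mxE; field; exact: lt0r_neq0.
have E2 : forall x, qform c0 P0 x = qform c0 ((- ls)^-1 *: P0) (c0 + r *: (x - c0)).
  move=> x; rewrite qformS (@qformZ _ _ c0 c0 P0 x r (c0 + r *: (x - c0))) ?r2; last by apply/matrixP => p q; rewrite !mxE; ring.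
  by rewrite mulrA mulVf ?mul1r // gt_eqF.
have [sub _] := part1.
split.
  move=> x hx; rewrite /ellipsoid /= E2; apply: sub.
  by rewrite /ellipsoid /= -E1.
set xq := c0 + r^-1 *: (xs - c0).
have wx : c0 + r *: (xq - c0) = xs.
  apply/matrixP => p q; rewrite /xq !mxE; field; exact: lt0r_neq0.
exists xq; split; apply: bd; [by rewrite E1 wx | by rewrite E2 wx].
Qed.
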